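(* Let $\mathbf C$ be a finite-type chain complex of real inner product spaces, let $I^\Delta$ be a Hodge basis, and let $M^\Delta$ be the Hodge matching on $(\mathbf C,I^\Delta)$. Then $M^\Delta$ is a Morse matching, the critical cells of degree $n$ span $\operatorname{Ker}\Delta_n$ for every $n$ (where $\Delta$ is the combinatorial Laplacian of $\mathbf C$), and the boundary operator of the Morse complex $\mathbf C^{M^\Delta}$ is zero.
   Context: $\mathbf C$ is a chain complex $(\mathbf C,\partial)$ of finite-dimensional real inner product spaces $\mathbf C_n$, $n\ge0$; $\partial^\dagger$ is the adjoint and $\Delta_n=\partial_n^\dagger\partial_n+\partial_{n+1}\partial_{n+1}^\dagger$. A Hodge basis: in each degree choose, via singular value decompositions, orthonormal bases $\mathcal R_+(\partial_m)$ of $\operatorname{Im}\partial_m^\dagger\subseteq\mathbf C_m$ and $\mathcal L_+(\partial_m)$ of $\operatorname{Im}\partial_m\subseteq\mathbf C_{m-1}$ with a bijection $v\mapsto w$ such that $\partial_m v=\sigma w$ with $\sigma>0$, and a basis $\mathcal B(\operatorname{Ker}\Delta_n)$; then $I^\Delta_n=\mathcal L_+(\partial_{n+1})\cup\mathcal R_+(\partial_n)\cup\mathcal B(\operatorname{Ker}\Delta_n)$, and $\mathbf C$ is based by the one-dimensional summands spanned by these vectors. The Hodge matching is $M^\Delta=\bigcup_i\{v\to w: v\in\mathcal R_+(\partial_i),w\in\mathcal L_+(\partial_i),\partial_iv=\sigma w,\sigma\ne0\}$. For a based complex with summands $C_\alpha$, $\partial_{\beta,\alpha}=\pi_\beta\partial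 i_\alpha$; the graph has an edge $\alpha\to\beta$ when $\partial_{\beta,\alpha}\ne0$; a Morse matching is an edge set $M$ with each cell on at most one edge, each $\partial_{\beta,\alpha}$ ($\alpha\to\beta\in M$) an isomorphism, and ''directed path from $\alpha$ to $\beta$ in the graph with $M$ reversed'' a partial order on each degree. Critical cells are unmatched ones. The Morse complex has chain groups spanned by critical cells and boundary $x\mapsto\sum_{\beta \text{ critical}}\Gamma_{\beta,\alpha}(x)$, where $\Gamma_{\beta,\alpha}$ sums, over directed paths from $\alpha$ to $\beta$ in the graph with $M$ reversed, the composite of $\partial_{\sigma_{i+1},\sigma_i}$ (ordinary steps) and $-\partial_{\sigma_i,\sigma_{i+1}}^{-1}$ (reversed matched edges). *)

(* Defs.v *)
From HB Require Import structures.
From mathcomp Require Import all_boot all_order all_algebra.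
From mathcomp Require Import reals.
Set Implicit Arguments. Unset Strict Implicit. Unset Printing Implicit Defensive.
Import Order.TTheory GRing.Theory Num.Theory.
Local Open Scope ring_scope.

(* Generic discrete Morse theory for a based complex all of whose summands  *)
(* C_alpha are one-dimensional, spanned by a basis vector e_alpha.  Then    *)
(*   partial_{beta,alpha} = pi_beta o partial o i_alpha : e_alpha |->       *)
(*   cf alpha beta *: e_beta,                                               *)
(* where cf alpha beta is the e_beta-coordinate of partial e_alpha.  Such   *)
(* a map is nonzero (an edge) iff it is an isomorphism iff cf <> 0, and     *)
(* composites / inverses of such maps are products / inverses of scalars.   *)
Section Morse.
Variables (R : fieldType) (T : eqType) (deg : T -> nat) (cf : T -> T -> R).

Definition edge (x y : T) : bool := cf x y != 0.

Variable M : T -> T -> bool.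

(* the graph with the edges of M reversed *)
Definition gM (x y : T) : bool := (edge x y && ~~ M x y) || (M y x && edge y x).

Definition reach (x y : T) : Prop :=
  exists p : seq T, path gM x p && (last x p == y).

Definition is_morse_matching : Prop :=
  [/\
      (forall x y, M x y -> cf x y != 0),
      (* each cell lies on at most one edge of M *)
      (forall x1 y1 x2 y2, M x1 y1 -> M x2 y2 ->
          [|| x1 == x2, x1 == y2, y1 == x2 | y1 == y2] -> x1 = x2 /\ y1 = y2)
    &
      (forall n x y z, deg x = n -> deg y = n -> deg z = n ->
          [/\ reach x x,
              (reach x y -> reach y x -> x = y)
            & (reach x y -> reach y z -> reach x z)])].

Definition critical (x : T) : Prop := forall y, ~~ M x y /\ ~~ M y x.

(* contribution of one step x -> y of a path in the graph with M reversed: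
   partial_{y,x} for an ordinary step, - partial_{x,y}^{-1} for a reversed
   matched edge y -> x *)
Definition step_weight (x y : T) : R := if M y x then - (cf y x)^-1 else cf x y.

Fixpoint path_weight (x : T) (p : seq T) : R :=
  if p is y :: q then step_weight x y * path_weight y q else 1.

(* When U contains every cell and the graph is acyclic
   (as for a Morse matching), this is the sum over all directed paths. *)
Definition Gamma (U : finType) (emb : U -> T) (y x : T) : R :=
  \sum_(k < #|U|.+1) \sum_(t : k.-tuple U |
      path gM x (map emb t) && (last x (map emb t) == y))
    path_weight x (map emb t).

End Morse.

(* Chain complexes of finite-dimensional real inner product spaces.  C_n is *)
(* modelled as row vectors 'rV[R]_(cdim n) with the standard inner product   *)
(* <u,v> = u *m v^T; the boundary partial_{k+1} : C_{k+1} -> C_k is        *)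
(* v |-> v *m bd k, so its adjoint is w |-> w *m (bd k)^T; partial_0 = 0.   *)
Record cplx (R : realType) := Cplx {
  cdim : nat -> nat;
  bd : forall k : nat, 'M[R]_(cdim k.+1, cdim k)
}.

Section Complex.
Variables (R : realType) (C : cplx R).

Definition is_chain_complex : Prop := forall k, bd C k.+1 *m bd C k = 0.

Definition finite_type (N : nat) : Prop := forall n, (N <= n)%N -> cdim C n = 0%N.

Definition Lap (n : nat) : 'M[R]_(cdim C n) :=
  (match n return 'M[R]_(cdim C n) with
   | 0 => 0
   | k.+1 => bd C k *m (bd C k)^T
   end) + (bd C n)^T *m bd C n.

Definition bdm (n m : nat) (v : 'rV[R]_(cdim C n)) : 'rV[R]_(cdim C m) :=
  match n =P m.+1 with
  | ReflectT e => castmx (erefl 1%N, congr1 (cdim C) e) v *m bd C m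
  | ReflectF _ => 0
  end.

(* For the boundary partial_{k+1}: the rows of
   Rv k (in C_{k+1}) form R_+(partial_{k+1}), the rows of Lv k (in C_k) form
   L_+(partial_{k+1}); the bijection v |-> w is row i |-> row i, with singular
   value sv k i.  The rows of Kb n form B(Ker Delta_n). *)
Record hbasis := HBasis {
  rk : nat -> nat;
  Rv : forall k, 'M[R]_(rk k, cdim C k.+1);
  Lv : forall k, 'M[R]_(rk k, cdim C k);
  sv : forall k, 'I_(rk k) -> R;
  hk : nat -> nat;
  Kb : forall n, 'M[R]_(hk n, cdim C n)
}.
Arguments sv h k i : clear implicits.

Definition is_hodge_basis (H : hbasis) : Prop :=
  [/\
      (forall k, Rv H k *m (Rv H k)^T = 1%:M /\ (Rv H k == (bd C k)^T)%MS),
      (forall k, Lv H k *m (Lv H k)^T = 1%:M /\ (Lv H k == bd C k)%MS),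
      (forall k (i : 'I_(rk H k)),
          0 < sv H k i /\ row i (Rv H k) *m bd C k = sv H k i *: row i (Lv H k))
    &
      (forall n, row_free (Kb H n) /\
         forall v : 'rV[R]_(cdim C n), (v <= Kb H n)%MS <-> v *m Lap n = 0)].

Variable H : hbasis.

(* number of cells of R_+(partial_n) (none for n = 0) *)
Definition rkR (n : nat) : nat := if n is k.+1 then rk H k else 0%N.

(* the cells of degree n:  I^Delta_n = L_+(partial_{n+1}) u R_+(partial_n)
   u B(Ker Delta_n) *)
Definition cells (n : nat) : finType := (('I_(rk H n) + 'I_(rkR n)) + 'I_(hk H n))%type.

Definition vecR (n : nat) : 'I_(rkR n) -> 'rV[R]_(cdim C n) :=
  match n return 'I_(rkR n) -> 'rV[R]_(cdim C n) with
  | 0 => fun _ => 0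
  | k.+1 => fun i => row i (Rv H k)
  end.

Definition cvec (n : nat) (a : cells n) : 'rV[R]_(cdim C n) :=
  match a with
  | inl (inl i) => row i (Lv H n)
  | inl (inr i) => vecR i
  | inr i => row i (Kb H n)
  end.

Definition Bmat (n : nat) : 'M[R]_(#|cells n|, cdim C n) :=
  \matrix_(j < #|cells n|, c < cdim C n) cvec (enum_val j) 0 c.

Definition ccoord (m : nat) (b : cells m) (w : 'rV[R]_(cdim C m)) : R :=
  (w *m pinvmx (Bmat m)) 0 (enum_rank b).

Definition gcell := {n : nat & cells n}.

Definition hcf (x y : gcell) : R :=
  ccoord (tagged y) (bdm (tag y) (cvec (tagged x))).

Definition hmatch (x y : gcell) : bool :=
  match x, y with
  | existT n (inl (inr i)), existT m (inl (inl j)) =>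
      (n == m.+1) && (val i == val j) && (sv H m j != 0)
  | _, _ => false
  end.

Definition ucell (N : nat) : finType := {n : 'I_N & cells n}.
Definition uemb (N : nat) (u : ucell N) : gcell := existT _ (val (tag u)) (tagged u).

End Complex.

Arguments hcf {R C} H x y.
Arguments hmatch {R C} H x y.
Arguments uemb {R C H} N u.

(* Main.v *)
Require Import Defs.
From HB Require Import structures.
From mathcomp Require Import all_boot all_order all_algebra.
From mathcomp Require Import reals zify.
Import Order.TTheory GRing.Theory Num.Theory.
Local Open Scope ring_scope.



Lemma sq0 (R : realType) p (u : 'rV[R]_p) :
  0 <= (u *m u^T) 0 0 /\ ((u *m u^T) 0 0 = 0 -> u = 0).
Proof.
have E : (u *m u^T) 0 0 = \sum_i u 0 i ^+ 2.
  by rewrite !mxE; apply: eq_bigr => i _; rewrite !mxE expr2.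
have P : forall i : 'I_p, true -> 0 <= u 0 i ^+ 2 by move=> i _; rewrite sqr_ge0.
rewrite E; split; first by apply: sumr_ge0.
move=> /psumr_eq0P h; apply/rowP => i; rewrite mxE.
by have /(_ isT) /eqP := h P i; rewrite sqrf_eq0 => /eqP.
Qed.

Lemma lap0_gen (R : realType) (C : cplx R) n (v : 'rV[R]_(cdim C n))
   (D : 'M[R]_(cdim C n)) q (w : 'rV[R]_q) :
   v *m D *m v^T = w *m w^T -> v *m (D + (bd C n)^T *m bd C n) = 0 ->
   w = 0 /\ v *m (bd C n)^T = 0.
Proof.
move=> hD h0.
have : (v *m (D + (bd C n)^T *m bd C n) *m v^T) 0 0 = 0 by rewrite h0 mul0mx mxE.
rewrite mulmxDr mulmxDl hD mxE.
have -> : v *m ((bd C n)^T *m bd C n) *m v^T = (v *m (bd C n)^T) *m (v *m (bd C n)^T)^T.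
  by rewrite trmx_mul trmxK !mulmxA.
have [a1 a2] := @sq0 _ _ w; have [b1 b2] := @sq0 _ _ (v *m (bd C n)^T).
by move=> /eqP; rewrite paddr_eq0 // => /andP[/eqP /a2 -> /eqP /b2 ->].
Qed.

Lemma lap0_up (R : realType) (C : cplx R) n (v : 'rV[R]_(cdim C n)) :
  v *m Lap C n = 0 -> v *m (bd C n)^T = 0.
Proof.
case: n v => [|k] v h.
  have [] := @lap0_gen _ _ _ v 0 _ (0 : 'rV[R]_0) _ h => //.
  by rewrite mulmx0 mul0mx trmx0 mulmx0.
have [] := @lap0_gen _ _ _ v (bd C k *m (bd C k)^T) _ (v *m bd C k) _ h => //.
by rewrite trmx_mul !mulmxA.
Qed.

Lemma lap0_down (R : realType) (C : cplx R) k (v : 'rV[R]_(cdim C k.+1)) :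
  v *m Lap C k.+1 = 0 -> v *m bd C k = 0.
Proof.
move=> h.
have [] := @lap0_gen _ _ _ v (bd C k *m (bd C k)^T) _ (v *m bd C k) _ h => //.
by rewrite trmx_mul !mulmxA.
Qed.



Definition RM (R : realType) (C : cplx R) (H : hbasis C) n : 'M[R]_(rkR H n, cdim C n) :=
  match n return 'M[R]_(rkR H n, cdim C n) with 0 => 0 | k.+1 => Rv H k end.
Arguments RM {R C} H n.

Lemma rowRM (R : realType) (C : cplx R) (H : hbasis C) n i : row i (RM H n) = vecR i.
Proof. by case: n i => [[]|k] i. Qed.

Lemma Kb_lap (R : realType) (C : cplx R) (H : hbasis C) :
  is_hodge_basis H -> forall n, Kb H n *m Lap C n = 0.
Proof.
case=> _ _ _ hK n; apply/row_matrixP => i; rewrite row_mul row0.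
by apply/(proj2 (hK n)); apply: row_sub.
Qed.

Lemma Kb_up (R : realType) (C : cplx R) (H : hbasis C) :
  is_hodge_basis H -> forall n, Kb H n *m (bd C n)^T = 0.
Proof.
move=> hH n; apply/row_matrixP => i; rewrite row_mul row0; apply: lap0_up.
by rewrite -row_mul Kb_lap // row0.
Qed.

Lemma Kb_down (R : realType) (C : cplx R) (H : hbasis C) :
  is_hodge_basis H -> forall k, Kb H k.+1 *m bd C k = 0.
Proof.
move=> hH n; apply/row_matrixP => i; rewrite row_mul row0; apply: lap0_down.
by rewrite -row_mul Kb_lap // row0.
Qed.

Lemma Lv_bd (R : realType) (C : cplx R) (H : hbasis C) :
  is_chain_complex C -> is_hodge_basis H -> forall k, Lv H k.+1 *m bd C k = 0.
Proof.
move=> hc [_ hL _ _] k; have [_ /andP[/submxP [D ->] _]] := hL k.+1.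
by rewrite -mulmxA hc mulmx0.
Qed.

Lemma LL (R : realType) (C : cplx R) (H : hbasis C) :
  is_hodge_basis H -> forall n, Lv H n *m (Lv H n)^T = 1%:M.
Proof. by case=> _ hL _ _ n; case: (hL n). Qed.

Lemma RR (R : realType) (C : cplx R) (H : hbasis C) :
  is_hodge_basis H -> forall n, RM H n *m (RM H n)^T = 1%:M.
Proof. case=> hR _ _ _ [|k]; first by rewrite !flatmx0. by case: (hR k). Qed.

Lemma LR (R : realType) (C : cplx R) (H : hbasis C) :
  is_chain_complex C -> is_hodge_basis H -> forall n, Lv H n *m (RM H n)^T = 0.
Proof.
move=> hc [hR hL _ _] [|k]; first by rewrite thinmx0.
rewrite /=.
have [_ /andP[/submxP [D ->] _]] := hL k.+1.
have [_ /andP[/submxP [E ->] _]] := hR k.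
by rewrite trmx_mul trmxK mulmxA -(mulmxA D) hc mulmx0 mul0mx.
Qed.

Lemma LK (R : realType) (C : cplx R) (H : hbasis C) :
  is_hodge_basis H -> forall n, Lv H n *m (Kb H n)^T = 0.
Proof.
move=> hH; have [_ hL _ _] := hH; move=> n.
have [_ /andP[/submxP [D ->] _]] := hL n.
by rewrite -mulmxA -(trmxK (bd C n)) -trmx_mul Kb_up // trmx0 mulmx0.
Qed.

Lemma RK (R : realType) (C : cplx R) (H : hbasis C) :
  is_hodge_basis H -> forall n, RM H n *m (Kb H n)^T = 0.
Proof.
move=> hH; have [hR _ _ _] := hH; case=> [|k]; first by rewrite flatmx0.
rewrite /=.
have [_ /andP[/submxP [D ->] _]] := hR k.
by rewrite -mulmxA -trmx_mul Kb_down // trmx0 mulmx0.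
Qed.



Lemma rowB (R : realType) (C : cplx R) (H : hbasis C) n (a : cells H n) :
  row (enum_rank a) (Bmat H n) = cvec a.
Proof. by apply/rowP => c; rewrite !mxE enum_rankK. Qed.

Lemma Bdecomp (R : realType) (C : cplx R) (H : hbasis C) n (x : 'rV[R]_#|cells H n|) :
 x *m Bmat H n = (\row_j x 0 (enum_rank (inl (inl j) : cells H n))) *m Lv H n
   + (\row_j x 0 (enum_rank (inl (inr j) : cells H n))) *m RM H n
   + (\row_j x 0 (enum_rank (inr j : cells H n))) *m Kb H n.
Proof.
rewrite !mulmx_sum_row.
rewrite (reindex (@enum_rank _)); last first.
  by exists enum_val => ? _; [rewrite enum_rankK | rewrite enum_valK].
under eq_bigr do rewrite rowB.
rewrite big_sumType /= big_sumType /=.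
congr (_ + _ + _); apply: eq_bigr => i _; rewrite mxE //.
by rewrite rowRM.
Qed.

Lemma Bfree (R : realType) (C : cplx R) (H : hbasis C) :
  is_chain_complex C -> is_hodge_basis H -> forall n, row_free (Bmat H n).
Proof.
move=> hc hH n.
have indep : forall x : 'rV[R]_#|cells H n|, x *m Bmat H n = 0 -> x = 0.
  move=> x; rewrite Bdecomp.
  set a := \row_j _; set b := \row_j _; set c := \row_j _ => h.
  have ha : a = 0.
    have := congr1 (mulmx^~ (Lv H n)^T) h.
    have e1 : RM H n *m (Lv H n)^T = 0.
      by rewrite -(trmxK (RM H n)) -trmx_mul LR // trmx0.
    have e2 : Kb H n *m (Lv H n)^T = 0.
      by rewrite -(trmxK (Kb H n)) -trmx_mul LK // trmx0.
    by rewrite mul0mx !mulmxDl -!mulmxA LL // e1 e2 !mulmx0 mulmx1 !addr0.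
  have hb : b = 0.
    have := congr1 (mulmx^~ (RM H n)^T) h.
    have e2 : Kb H n *m (RM H n)^T = 0.
      by rewrite -(trmxK (Kb H n)) -trmx_mul RK // trmx0.
    by rewrite mul0mx !mulmxDl -!mulmxA RR // LR // e2 !mulmx0 mulmx1 add0r addr0.
  have hcc : c = 0.
    move: h; rewrite ha hb !mul0mx !add0r.
    have [_ _ _ hK] := hH; have [fK _] := hK n.
    by move/eqP; rewrite mulmx_free_eq0 // => /eqP.
  apply/rowP => j; rewrite mxE -(enum_valK j).
  case: (enum_val j) => [[i|i]|i].
  - by move/rowP: ha => /(_ i); rewrite !mxE.
  - by move/rowP: hb => /(_ i); rewrite !mxE.
  - by move/rowP: hcc => /(_ i); rewrite !mxE.
rewrite -kermx_eq0; apply/eqP/row_matrixP => i; rewrite row0; apply: indep.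
by rewrite -row_mul mulmx_ker row0.
Qed.

Lemma ccoord_cvec (R : realType) (C : cplx R) (H : hbasis C) :
  is_chain_complex C -> is_hodge_basis H -> forall n (a b : cells H n),
  ccoord b (cvec a) = (a == b)%:R.
Proof.
move=> hc hH n a b; rewrite /ccoord -rowB rowE mulmxKp ?Bfree // mxE /=.
rewrite (inj_eq enum_rank_inj).
by rewrite eq_sym.
Qed.

Lemma ccoordZ (R : realType) (C : cplx R) (H : hbasis C) n (b : cells H n) c w :
  ccoord b (c *: w) = c * ccoord b w.
Proof. by rewrite /ccoord -scalemxAl mxE. Qed.

Lemma ccoord0 (R : realType) (C : cplx R) (H : hbasis C) n (b : cells H n) :
  ccoord b 0 = 0.
Proof. by rewrite /ccoord mul0mx mxE. Qed.



Definition kind (R : realType) (C : cplx R) (H : hbasis C) (x : gcell H) : nat :=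
  match tagged x with inl (inl _) => 0 | inl (inr _) => 1 | inr _ => 2 end.
Definition vI (R : realType) (C : cplx R) (H : hbasis C) (x : gcell H) : nat :=
  match tagged x with inl (inl i) => val i | inl (inr i) => val i | inr i => val i end.
Arguments kind {R C H} x.
Arguments vI {R C H} x.

Lemma hmatchP (R : realType) (C : cplx R) (H : hbasis C) (x y : gcell H) :
  hmatch H x y -> [/\ kind x = 1%N, kind y = 0%N, tag x = (tag y).+1 & vI x = vI y].
Proof.
case: x => n [[i|i]|i]; case: y => m [[j|j]|j] //=.
by move/andP => [/andP [/eqP en /eqP e] _]; subst n.
Qed.

Lemma gcell_eq (R : realType) (C : cplx R) (H : hbasis C) (x y : gcell H) :
  tag x = tag y -> kind x = kind y -> vI x = vI y -> x = y.
Proof.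
case: x => n a; case: y => m b /= e; subst m.
case: a => [[i|i]|i]; case: b => [[j|j]|j] //= _ e;
  by have -> : i = j by apply: val_inj.
Qed.

Lemma hcfR (R : realType) (C : cplx R) (H : hbasis C) :
  is_chain_complex C -> is_hodge_basis H ->
  forall m (i : 'I_(rk H m)) (b : cells H m),
  hcf H (existT _ m.+1 (inl (inr i) : cells H m.+1)) (existT _ m b)
   = @sv _ _ H m i * ((inl (inl i) : cells H m) == b)%:R.
Proof.
move=> hc hH m i b; rewrite /hcf /= /bdm.
case: eqP => // e; have -> : e = erefl by apply: eq_irrelevance.
rewrite castmx_id /=.
have [_ _ hS _] := hH; rewrite (proj2 (hS m i)) ccoordZ.
have -> : row i (Lv H m) = cvec (inl (inl i) : cells H m) by [].
by rewrite (ccoord_cvec _ _ _ hc hH _ (inl (inl i))).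
Qed.

Lemma noedge (R : realType) (C : cplx R) (H : hbasis C) :
  is_chain_complex C -> is_hodge_basis H ->
  forall x z : gcell H, hcf H x z != 0 -> hmatch H x z.
Proof.
move=> hc hH [n a] [m b].
case: (eqVneq n m.+1) => [e|ne]; last first.
  rewrite /hcf /= /bdm; case: eqP => [e|_]; [by rewrite e eqxx in ne | by rewrite ccoord0 eqxx].
subst n; case: a => [[i|i]|i].
- rewrite /hcf /= /bdm; case: eqP => // e; have -> : e = erefl by apply: eq_irrelevance.
  by rewrite castmx_id /= -row_mul Lv_bd // row0 ccoord0 eqxx.
- rewrite hcfR //; case: b => [[j|j]|j] /=; rewrite ?mulr0 ?eqxx //.
  case: (eqVneq i j) => [<-|nij].
    by rewrite eqxx mulr1 /= !eqxx.
  have -> : (inl (inl i) == inl (inl j) :> cells H m) = false.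
    by apply/eqP => -[] e; rewrite e eqxx in nij.
  by rewrite mulr0 eqxx.
- rewrite /hcf /= /bdm; case: eqP => // e; have -> : e = erefl by apply: eq_irrelevance.
  by rewrite castmx_id /= -row_mul Kb_down // row0 ccoord0 eqxx.
Qed.



Lemma gM_m (R : realType) (C : cplx R) (H : hbasis C) :
  is_chain_complex C -> is_hodge_basis H ->
  forall x z : gcell H, gM (hcf H) (hmatch H) x z -> hmatch H z x.
Proof.
move=> hc hH x z; rewrite /gM /edge.
by case/orP => [/andP [/(noedge _ _ _ hc hH) -> ]|/andP[]].
Qed.

Lemma kind2_crit (R : realType) (C : cplx R) (H : hbasis C) (x : gcell H) :
  kind x = 2%N -> critical (hmatch H) x.
Proof.
move=> k y; split; apply/negP => /hmatchP [k1 k2 _ _]; by rewrite k in k1 k2.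
Qed.

Lemma crit_kind (R : realType) (C : cplx R) (H : hbasis C) :
  is_hodge_basis H -> forall x : gcell H, critical (hmatch H) x -> kind x = 2%N.
Proof.
move=> hH [n [[i|i]|i]] h //=; have [_ _ hS _] := hH.
- have [_] := h (existT _ n.+1 (inl (inr i) : cells H n.+1)).
  by rewrite /= !eqxx /= lt0r_neq0 // (proj1 (hS n i)).
- case: n i h => [[]//|k] i h.
  have [] := h (existT _ k (inl (inl i) : cells H k)).
  by rewrite /= !eqxx /= lt0r_neq0 // (proj1 (hS k i)).
Qed.

Lemma reach_eq (R : realType) (C : cplx R) (H : hbasis C) :
  is_chain_complex C -> is_hodge_basis H ->
  forall x y : gcell H, tag x = tag y -> reach (hcf H) (hmatch H) x y -> x = y.
Proof.
move=> hc hH x y et [p /andP [hp /eqP hl]].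
case: p hp hl => [|z q] //= /andP [/(gM_m _ _ _ hc hH) hz hq].
case: q hq => [|z' q] /=.
  move=> _ hl; subst z; have [_ _ e _] := hmatchP _ _ _ _ _ hz.
  by rewrite et in e; lia.
move/andP => [/(gM_m _ _ _ hc hH) hz' _].
have [k1 _ _ _] := hmatchP _ _ _ _ _ hz; have [_ k0 _ _] := hmatchP _ _ _ _ _ hz'.
by rewrite k1 in k0.
Qed.

Theorem mainTheorem4 (R : realType) (C : cplx R) (N : nat) (H : hbasis C) :
  is_chain_complex C -> finite_type C N -> is_hodge_basis H ->
  [/\ (* M^Delta is a Morse matching *)
      is_morse_matching (fun x : gcell H => tag x) (hcf H) (hmatch H),
      (* the critical cells of degree n span Ker Delta_n *)
      (forall (n : nat) (v : 'rV[R]_(cdim C n)),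
         v *m Lap C n = 0 <->
         exists c : cells H n -> R,
           (forall a : cells H n, ~ critical (hmatch H) (existT _ n a) -> c a = 0)
           /\ v = \sum_(a : cells H n) c a *: cvec a)
    & (* the boundary of the Morse complex C^{M^Delta} is zero *)
      (forall x y : gcell H, critical (hmatch H) x -> critical (hmatch H) y ->
         (tag y).+1 = tag x ->
         Gamma (hcf H) (hmatch H) (uemb N) y x = 0)].
Proof.
move=> hc _ hH; split.
- split.
  + move=> [n [[i|i]|i]] [m [[j|j]|j]] //= /andP [/andP [/eqP en /eqP e] hs].
    subst n; have -> : i = j by apply: val_inj.
    by rewrite hcfR // eqxx mulr1.
  + move=> x1 y1 x2 y2 /hmatchP [a1 b1 c1 d1] /hmatchP [a2 b2 c2 d2].
    case/or4P => /eqP e; subst.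
    * by split=> //; apply: gcell_eq; [lia | rewrite b1 b2 | rewrite -d1 -d2].
    * by rewrite a1 in b2.
    * by rewrite a2 in b1.
    * by split=> //; apply: gcell_eq; [lia | rewrite a1 a2 | rewrite d1 d2].
  + move=> n x y z ex ey ez; split.
    * by rewrite /reach; exists [::]; rewrite /= eqxx.
    * by move=> /(reach_eq _ _ _ hc hH) -> //; rewrite ex ey.
    * by move=> /(reach_eq _ _ _ hc hH) -> //; rewrite ex ey.
- move=> n v; have [_ _ _ hK] := hH; split.
  + move=> hv; have /submxP [D ->] : (v <= Kb H n)%MS by apply/(proj2 (hK n)).
    exists (fun a => match a with inr i => D 0 i | _ => 0 end); split.
      case=> [[i|i]|i] //= hnc; exfalso; apply: hnc; exact: kind2_crit.
    rewrite big_sumType /= big1 ?add0r; last by case=> i _; rewrite scale0r.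
    rewrite mulmx_sum_row; apply: eq_bigr => i _ /=; done.
  + move=> [c [hcr ->]]; apply/(proj2 (hK n)).
    rewrite big_sumType /= big1 ?add0r; last first.
      case=> i _; rewrite hcr ?scale0r // => /(crit_kind _ _ _ hH) //.
    have -> : \sum_i c (inr i) *: cvec (inr i : cells H n) = (\row_i c (inr i)) *m Kb H n.
      by rewrite mulmx_sum_row; apply: eq_bigr => i _; rewrite mxE.
    exact: submxMl.
- move=> x y hx hy ey; have kx := crit_kind _ _ _ hH _ hx.
  rewrite /Gamma big1 // => k _; rewrite big_pred0 // => t.
  case: (map _ _) => [|z s] /=.
    by apply/negbTE/negP => /eqP exy; move: ey; rewrite exy => /eqP; rewrite eqn_leq ltnn.
  apply/negbTE/negP => /andP [/andP [/(gM_m _ _ _ hc hH) hz _] _].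
  have [_ k0 _ _] := hmatchP _ _ _ _ _ hz.
  by rewrite kx in k0.
Qed.
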